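(* Let $(X,*,0)$ be a solid weak BCC-algebra and define $x\wedge y=y*(y*x)$. Then the following are equivalent: (1) $X$ is branchwise commutative; (2) for each $a\in I(X)$, the branch $B(a)$ is a semilattice with respect to the operation $\wedge$; (3) $A(x)\cap A(y)=A(x\wedge y)$ for all $x,y$ belonging to the same branch.
   Context: A weak BCC-algebra is a set $X$ with a binary operation $*$ and a constant $0$ satisfying, for all $x,y,z\in X$: (i) $((x*y)*(z*y))*(x*z)=0$; (ii) $x*x=0$; (iii) $x*0=x$; (iv) $x*y=y*x=0$ implies $x=y$. The relation $x\leqslant y$ iff $x*y=0$ is a partial order on $X$. Let $I(X)$ be the set of minimal elements of $X$ with respect to $\leqslant$. For $a\in I(X)$ the branch initiated by $a$ is $B(a)=\{x\in X: a\leqslant x\}$; ''belonging to the same branch'' means lying in a common $B(a)$. For $b\in X$, the initial part is $A(b)=\{x\in X: x\leqslant b\}$. A weak BCC-algebra is called (left) solid if $(x*y)*z=(x*z)*y$ holds for all $x,y$ belonging to the same branch and all $z\in X$. It is called branchwise commutative if $x*(x*y)=y*(y*x)$ holds for all $x,y$ belonging to the same branch. *)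

(* Defs.v *)
Section WeakBCC.
Variables (X : Type) (op : X -> X -> X) (e : X).
Local Infix "*" := op.

Definition weak_BCC : Prop :=
  (forall x y z, ((x * y) * (z * y)) * (x * z) = e) /\
  (forall x, x * x = e) /\
  (forall x, x * e = x) /\
  (forall x y, x * y = e -> y * x = e -> x = y).

Definition bcc_le (x y : X) : Prop := x * y = e.

Definition minimal_elt (a : X) : Prop := forall x, bcc_le x a -> x = a.

Definition branch (a : X) (x : X) : Prop := bcc_le a x.

Definition same_branch (x y : X) : Prop :=
  exists a, minimal_elt a /\ branch a x /\ branch a y.

Definition initial_part (b : X) (x : X) : Prop := bcc_le x b.

Definition solid : Prop :=
  forall x y z, same_branch x y -> (x * y) * z = (x * z) * y.

Definition branchwise_commutative : Prop :=
  forall x y, same_branch x y -> x * (x * y) = y * (y * x).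

Definition bmeet (x y : X) : X := y * (y * x).

End WeakBCC.

Definition semilattice_on {X : Type} (S : X -> Prop) (f : X -> X -> X) : Prop :=
  (forall x y, S x -> S y -> S (f x y)) /\
  (forall x, S x -> f x x = x) /\
  (forall x y, S x -> S y -> f x y = f y x) /\
  (forall x y z, S x -> S y -> S z -> f x (f y z) = f (f x y) z).

(* Main.v *)
Require Import Defs.

Lemma L_M1 X op e (HX : weak_BCC X op e) x y z :
  op x y = e -> op (op x z) (op y z) = e.
Proof.
  destruct HX as [H1 [H2 [H3 H4]]]. intros H.
  pose proof (H1 x z y) as K. rewrite H, H3 in K. exact K.
Qed.

Lemma L_M2 X op e (HX : weak_BCC X op e) x y z :
  op z y = e -> op (op x y) (op x z) = e.
Proof.
  destruct HX as [H1 [H2 [H3 H4]]]. intros H.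
  pose proof (H1 x y z) as K. rewrite H, H3 in K. exact K.
Qed.

Lemma L_le0 X op e (HX : weak_BCC X op e) u : op u e = e -> u = e.
Proof.
  destruct HX as [H1 [H2 [H3 H4]]]. intros H. rewrite H3 in H. exact H.
Qed.

Lemma L_trans X op e (HX : weak_BCC X op e) x y z :
  op x y = e -> op y z = e -> op x z = e.
Proof.
  intros Hxy Hyz. pose proof (L_M2 X op e HX x z y Hyz) as K.
  rewrite Hxy in K. apply (L_le0 X op e HX) in K. exact K.
Qed.

Lemma L_min00 X op e (HX : weak_BCC X op e) a :
  minimal_elt X op e a -> op e (op e a) = a.
Proof.
  intros Ha. pose proof HX as HX'. destruct HX' as [H1 [H2 [H3 H4]]].
  apply Ha. unfold bcc_le.
  pose proof (H1 a a e) as K. rewrite H2, H3 in K. exact K.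
Qed.

Lemma L_below X op e (HX : weak_BCC X op e) a x t :
  minimal_elt X op e a -> op a x = e -> op t x = e -> op a t = e.
Proof.
  intros Ha Hax Htx. pose proof HX as HX'. destruct HX' as [H1 [H2 [H3 H4]]].
  assert (Hr : op e (op t a) = e).
  { pose proof (H1 t x a) as K. rewrite Htx, Hax, H2 in K. exact K. }
  assert (K1 : op (op (op t a) (op e a)) t = e).
  { pose proof (H1 t a e) as K. rewrite H3 in K. exact K. }
  assert (K2 : op a (op (op t a) (op e a)) = e).
  { pose proof (H1 e (op e a) (op t a)) as K.
    rewrite (L_min00 X op e HX a Ha), Hr, H3 in K. exact K. }
  exact (L_trans X op e HX _ _ _ K2 K1).
Qed.

Lemma L_S0 X op e (HX : weak_BCC X op e) a x y :
  op a x = e -> op a y = e -> op e (op x y) = e.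
Proof.
  intros Hx Hy. pose proof (L_M1 X op e HX a x y Hx) as K.
  rewrite Hy in K. exact K.
Qed.

Lemma L_minB0 X op e (HX : weak_BCC X op e) a z :
  minimal_elt X op e a -> op e z = e -> op a z = a.
Proof.
  intros Ha Hz. pose proof HX as HX'. destruct HX' as [H1 [H2 [H3 H4]]].
  apply Ha. unfold bcc_le.
  pose proof (H1 a z e) as K. rewrite Hz, H3, H3 in K. exact K.
Qed.


Lemma L_mle1 X op e (HX : weak_BCC X op e) (Hs : solid X op e) x y :
  same_branch X op e x y -> op (op y (op y x)) x = e.
Proof.
  intros Hb. pose proof HX as HX'. destruct HX' as [H1 [H2 [H3 H4]]].
  assert (Hb' : same_branch X op e y x).
  { destruct Hb as [a [Ha [Hx Hy]]]. exists a; auto. }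
  pose proof (Hs y x (op y x) Hb') as K. rewrite H2 in K. symmetry. exact K.
Qed.

Lemma L_mle2 X op e (HX : weak_BCC X op e) (Hs : solid X op e) x y :
  same_branch X op e x y -> op (op y (op y x)) y = e.
Proof.
  intros Hb. pose proof HX as HX'. destruct HX' as [H1 [H2 [H3 H4]]].
  destruct Hb as [a [Ha [Hx Hy]]].
  assert (Hyy : same_branch X op e y y) by (exists a; auto).
  pose proof (Hs y y (op y x) Hyy) as K. rewrite H2 in K.
  rewrite (L_S0 X op e HX a y x Hy Hx) in K. symmetry. exact K.
Qed.

Lemma L_mB X op e (HX : weak_BCC X op e) a x y :
  minimal_elt X op e a -> op a x = e -> op a y = e -> op a (op y (op y x)) = e.
Proof.
  intros Ha Hx Hy.
  pose proof (L_M1 X op e HX a y (op y x) Hy) as K.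
  rewrite (L_minB0 X op e HX a (op y x) Ha (L_S0 X op e HX a y x Hy Hx)) in K.
  exact K.
Qed.

Lemma L_glb X op e (HX : weak_BCC X op e) (Hbc : branchwise_commutative X op e)
  a x y t : minimal_elt X op e a -> op a x = e -> op a y = e ->
  op t x = e -> op t y = e -> op t (op y (op y x)) = e.
Proof.
  intros Ha Hx Hy Htx Hty. pose proof HX as HX'. destruct HX' as [H1 [H2 [H3 H4]]].
  assert (Hat : op a t = e) by exact (L_below X op e HX a x t Ha Hx Htx).
  assert (Hyt : op y (op y t) = t).
  { rewrite (Hbc y t). rewrite Hty, H3. reflexivity. exists a; auto. }
  pose proof (L_M2 X op e HX y x t Htx) as K1.
  pose proof (L_M2 X op e HX y (op y t) (op y x) K1) as K2.
  rewrite Hyt in K2. exact K2.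
Qed.

Lemma L_P1 X op e (HX : weak_BCC X op e) (Hs : solid X op e) :
  branchwise_commutative X op e ->
  forall a, minimal_elt X op e a -> semilattice_on (branch X op e a) (bmeet X op).
Proof.
  intros Hbc a Ha. pose proof HX as HX'. destruct HX' as [H1 [H2 [H3 H4]]].
  unfold semilattice_on, branch, bcc_le, bmeet.
  assert (Hsb : forall u v, op a u = e -> op a v = e -> same_branch X op e u v)
    by (intros u v Hu Hv; exists a; auto).
  assert (Hcl : forall u v, op a u = e -> op a v = e -> op a (op v (op v u)) = e)
    by (intros; apply (L_mB X op e HX a); auto).
  assert (Hlo1 : forall u v, op a u = e -> op a v = e -> op (op v (op v u)) u = e)
    by (intros; apply (L_mle1 X op e HX Hs); auto).
  assert (Hlo2 : forall u v, op a u = e -> op a v = e -> op (op v (op v u)) v = e)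
    by (intros; apply (L_mle2 X op e HX Hs); auto).
  assert (Hg : forall u v t, op a u = e -> op a v = e -> op t u = e -> op t v = e ->
                 op t (op v (op v u)) = e)
    by (intros; apply (L_glb X op e HX Hbc a); auto).
  split; [exact Hcl|]. split; [intros x _; rewrite H2, H3; reflexivity|].
  split; [intros x y Hx Hy; symmetry; apply Hbc; auto|].
  intros x y z Hx Hy Hz.
  set (yz := op z (op z y)). set (xy := op y (op y x)).
  assert (Hyz : op a yz = e) by (apply Hcl; auto).
  assert (Hxy : op a xy = e) by (apply Hcl; auto).
  set (L := op yz (op yz x)). set (R := op z (op z xy)).
  assert (HL1 : op L x = e) by (apply Hlo1; auto).
  assert (HL2 : op L yz = e) by (apply Hlo2; auto).
  assert (HLy : op L y = e) by (apply (L_trans X op e HX _ yz); auto; apply Hlo1; auto).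
  assert (HLz : op L z = e) by (apply (L_trans X op e HX _ yz); auto; apply Hlo2; auto).
  assert (HR1 : op R xy = e) by (apply Hlo1; auto).
  assert (HR2 : op R z = e) by (apply Hlo2; auto).
  assert (HRx : op R x = e) by (apply (L_trans X op e HX _ xy); auto; apply Hlo1; auto).
  assert (HRy : op R y = e) by (apply (L_trans X op e HX _ xy); auto; apply Hlo2; auto).
  apply H4.
  - apply Hg; auto. apply Hg; auto.
  - apply Hg; auto. apply Hg; auto.
Qed.

Lemma L_P2 X op e :
  (forall a, minimal_elt X op e a -> semilattice_on (branch X op e a) (bmeet X op)) ->
  branchwise_commutative X op e.
Proof.
  intros H x y [a [Ha [Hx Hy]]].
  destruct (H a Ha) as [_ [_ [Hc _]]].
  pose proof (Hc x y Hx Hy) as K. unfold bmeet in K. symmetry. exact K.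
Qed.

Lemma L_P3 X op e (HX : weak_BCC X op e) (Hs : solid X op e) :
  branchwise_commutative X op e ->
  forall x y, same_branch X op e x y ->
        forall t, (initial_part X op e x t /\ initial_part X op e y t) <->
                  initial_part X op e (bmeet X op x y) t.
Proof.
  intros Hbc x y Hb t. unfold initial_part, bcc_le, bmeet.
  pose proof Hb as Hb'. destruct Hb' as [a [Ha [Hx Hy]]].
  split.
  - intros [Htx Hty]. apply (L_glb X op e HX Hbc a); auto.
  - intros Ht. split.
    + apply (L_trans X op e HX _ _ _ Ht). apply (L_mle1 X op e HX Hs); auto.
    + apply (L_trans X op e HX _ _ _ Ht). apply (L_mle2 X op e HX Hs); auto.
Qed.

Lemma L_P4 X op e (HX : weak_BCC X op e) (Hs : solid X op e) :
  (forall x y, same_branch X op e x y ->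
        forall t, (initial_part X op e x t /\ initial_part X op e y t) <->
                  initial_part X op e (bmeet X op x y) t) ->
  branchwise_commutative X op e.
Proof.
  intros H x y Hb. pose proof HX as HX'. destruct HX' as [H1 [H2 [H3 H4]]].
  assert (Hb' : same_branch X op e y x).
  { destruct Hb as [a [Ha [Hx Hy]]]. exists a; auto. }
  apply H4.
  - pose proof (proj1 (H x y Hb (op x (op x y)))) as K.
    unfold initial_part, bcc_le, bmeet in K. apply K. split.
    + apply (L_mle2 X op e HX Hs); auto.
    + apply (L_mle1 X op e HX Hs); auto.
  - pose proof (proj1 (H y x Hb' (op y (op y x)))) as K.
    unfold initial_part, bcc_le, bmeet in K. apply K. split.
    + apply (L_mle2 X op e HX Hs); auto.
    + apply (L_mle1 X op e HX Hs); auto.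
Qed.

Theorem theorem3p7 (X : Type) (op : X -> X -> X) (e : X)
  (HX : weak_BCC X op e) (Hsolid : solid X op e) :
  (branchwise_commutative X op e <->
     (forall a, minimal_elt X op e a ->
        semilattice_on (branch X op e a) (bmeet X op))) /\
  ((forall a, minimal_elt X op e a ->
        semilattice_on (branch X op e a) (bmeet X op)) <->
     (forall x y, same_branch X op e x y ->
        forall t, (initial_part X op e x t /\ initial_part X op e y t) <->
                  initial_part X op e (bmeet X op x y) t)).
Proof.
  split; split; intros H.
  - exact (L_P1 X op e HX Hsolid H).
  - exact (L_P2 X op e H).
  - exact (L_P3 X op e HX Hsolid (L_P2 X op e H)).
  - exact (L_P1 X op e HX Hsolid (L_P4 X op e HX Hsolid H)).
Qed.
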